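(* Let $R$ be a commutative ring with identity and $S$ a multiplicative subset of $R$. Then: (1) every absolutely pure $R$-module and every $u$-$S$-injective $R$-module is $u$-$S$-absolutely pure; (2) every finite direct sum of $u$-$S$-absolutely pure modules is $u$-$S$-absolutely pure; (3) if $0\rightarrow A\rightarrow B\rightarrow C\rightarrow 0$ is a short $u$-$S$-exact sequence with $A$ and $C$ $u$-$S$-absolutely pure, then $B$ is $u$-$S$-absolutely pure; (4) the class of $u$-$S$-absolutely pure modules is closed under $u$-$S$-isomorphisms, i.e. if there is a $u$-$S$-isomorphism $A\to B$ and $A$ is $u$-$S$-absolutely pure, then $B$ is $u$-$S$-absolutely pure; (5) if $0\rightarrow A\rightarrow B\rightarrow C\rightarrow 0$ is a $u$-$S$-pure short $u$-$S$-exact sequence and $B$ is $u$-$S$-absolutely pure, then $A$ is $u$-$S$-absolutely pure.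
   Context: A multiplicative subset $S$ satisfies $1\in S$ and is closed under products. An $R$-module $T$ is $u$-$S$-torsion if $sT=0$ for some $s\in S$. A short sequence $0\to A\xrightarrow{f}B\xrightarrow{g}C\to 0$ is $u$-$S$-exact if there is $s\in S$ with $s\,\mathrm{Ker}(f)=0$, $s\,\mathrm{Ker}(g)\subseteq\mathrm{Im}(f)$, $s\,\mathrm{Im}(f)\subseteq\mathrm{Ker}(g)$, $sC\subseteq\mathrm{Im}(g)$. A homomorphism $f:A\to B$ is a $u$-$S$-isomorphism if there is $s\in S$ with $s\,\mathrm{Ker}(f)=0$ and $sB\subseteq\mathrm{Im}(f)$. A short $u$-$S$-exact sequence is $u$-$S$-pure if tensoring it with any $R$-module $M$ gives a short $u$-$S$-exact sequence. An $R$-module $E$ is $u$-$S$-absolutely pure if every short $u$-$S$-exact sequence $0\to E\to B\to C\to 0$ beginning with $E$ is $u$-$S$-pure. $E$ is absolutely pure if it is a pure submodule of every module containing it (equivalently $\mathrm{Ext}^1_R(N,E)=0$ for all finitely presented $N$). $E$ is $u$-$S$-injective if $\mathrm{Hom}_R(-,E)$ sends short $u$-$S$-exact sequences to short $u$-$S$-exact sequences (equivalently $\mathrm{Ext}^1_R(M,E)$ is $u$-$S$-torsion for all $R$-modules $M$). *)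

(* Defs.v *)
From mathcomp Require Import all_boot all_algebra.
Set Implicit Arguments. Unset Strict Implicit. Unset Printing Implicit Defensive.
Import GRing.Theory.
Local Open Scope ring_scope.

Section UScomm.
Variable R : comPzRingType.

Definition mult_subset (S : R -> Prop) : Prop :=
  S 1 /\ (forall a b, S a -> S b -> S (a * b)).

Definition is_lin (U V : lmodType R) (f : U -> V) : Prop :=
  forall (k : R) (x y : U), f (k *: x + y) = k *: f x + f y.

Definition uS_exact (S : R -> Prop) (A B C : lmodType R)
    (f : {linear A -> B}) (g : {linear B -> C}) : Prop :=
  exists s, S s /\
    (forall a, f a = 0 -> s *: a = 0) /\
    (forall b, g b = 0 -> exists a, f a = s *: b) /\
    (forall a, g (s *: f a) = 0) /\
    (forall c, exists b, g b = s *: c).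

Record tensor_product (M N : lmodType R) := TensorProduct {
  tp_mod :> lmodType R;
  tp_map : M -> N -> tp_mod;
  tp_bilin : (forall m, is_lin (tp_map m)) /\ (forall n, is_lin (fun m => tp_map m n));
  tp_univ : forall (P : lmodType R) (b : M -> N -> P),
     (forall m, is_lin (b m)) -> (forall n, is_lin (fun m => b m n)) ->
     (exists f : {linear tp_mod -> P}, forall m n, f (tp_map m n) = b m n) /\
     (forall f g : {linear tp_mod -> P},
         (forall m n, f (tp_map m n) = b m n) ->
         (forall m n, g (tp_map m n) = b m n) -> f =1 g)
}.

(* phi is the map 1_M (x) f : M (x) A -> M (x) B (unique by the universal property) *)
Definition is_tensor_map (M A B : lmodType R) (f : A -> B)
    (TA : tensor_product M A) (TB : tensor_product M B) (phi : TA -> TB) : Prop :=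
  forall m a, phi (tp_map TA m a) = tp_map TB m (f a).

Definition uS_pure (S : R -> Prop) (A B C : lmodType R)
    (f : {linear A -> B}) (g : {linear B -> C}) : Prop :=
  uS_exact S f g /\
  forall (M : lmodType R) (TA : tensor_product M A) (TB : tensor_product M B)
         (TC : tensor_product M C)
         (phi : {linear TA -> TB}) (psi : {linear TB -> TC}),
    is_tensor_map f phi -> is_tensor_map g psi -> uS_exact S phi psi.

Definition uS_abs_pure (S : R -> Prop) (E : lmodType R) : Prop :=
  forall (B C : lmodType R) (f : {linear E -> B}) (g : {linear B -> C}),
    uS_exact S f g -> uS_pure S f g.

(* absolutely pure: pure submodule of every module containing it, i.e. for every
   injective linear i : E -> B and every M, 1_M (x) i is injective *)
Definition abs_pure (E : lmodType R) : Prop :=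
  forall (B : lmodType R) (i : {linear E -> B}), injective i ->
  forall (M : lmodType R) (TE : tensor_product M E) (TB : tensor_product M B)
         (phi : {linear TE -> TB}),
    is_tensor_map i phi -> injective phi.

(* u-S-injective: Hom_R(-,E) sends short u-S-exact sequences 0->A->B->C->0 to
   short u-S-exact sequences 0->Hom(C,E)->Hom(B,E)->Hom(A,E)->0 (maps are
   precomposition with g and f; equality in Hom is pointwise) *)
Definition uS_injective (S : R -> Prop) (E : lmodType R) : Prop :=
  forall (A B C : lmodType R) (f : {linear A -> B}) (g : {linear B -> C}),
    uS_exact S f g ->
    exists s, S s /\
      (forall h : {linear C -> E}, (forall b, h (g b) = 0) ->
          forall c, s *: h c = 0) /\
      (forall h : {linear B -> E}, (forall a, h (f a) = 0) ->
          exists k : {linear C -> E}, forall b, k (g b) = s *: h b) /\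
      (forall (k : {linear C -> E}) a, s *: k (g (f a)) = 0) /\
      (forall h : {linear A -> E},
          exists k : {linear B -> E}, forall a, k (f a) = s *: h a).

Definition uS_iso (S : R -> Prop) (A B : lmodType R) (f : {linear A -> B}) : Prop :=
  exists s, S s /\ (forall a, f a = 0 -> s *: a = 0) /\
                   (forall b, exists a, f a = s *: b).

Fixpoint dsum (M0 : lmodType R) (l : seq (lmodType R)) : lmodType R :=
  match l with
  | [::] => M0
  | M1 :: l' => ((M0 * dsum M1 l')%type : lmodType R)
  end.

End UScomm.

(* Main.v *)
Require Import Defs.
From HB Require Import structures.
From mathcomp Require Import all_boot all_algebra.
From mathcomp Require Import boolp ring.
Set Implicit Arguments. Unset Strict Implicit. Unset Printing Implicit Defensive.
Import GRing.Theory.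
Local Open Scope ring_scope.

Record premod (R : comPzRingType) := PreMod {
  pm_car : Type;
  pm_add : pm_car -> pm_car -> pm_car;
  pm_opp : pm_car -> pm_car;
  pm_zero : pm_car;
  pm_scale : R -> pm_car -> pm_car;
  pm_eqv : pm_car -> pm_car -> Prop;
  pm_refl : forall x, pm_eqv x x;
  pm_sym : forall x y, pm_eqv x y -> pm_eqv y x;
  pm_trans : forall x y z, pm_eqv x y -> pm_eqv y z -> pm_eqv x z;
  pm_add_cong : forall x x' y y', pm_eqv x x' -> pm_eqv y y' ->
      pm_eqv (pm_add x y) (pm_add x' y');
  pm_opp_cong : forall x x', pm_eqv x x' -> pm_eqv (pm_opp x) (pm_opp x');
  pm_scale_cong : forall k x x', pm_eqv x x' -> pm_eqv (pm_scale k x) (pm_scale k x');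
  pm_addA : forall x y z, pm_eqv (pm_add x (pm_add y z)) (pm_add (pm_add x y) z);
  pm_addC : forall x y, pm_eqv (pm_add x y) (pm_add y x);
  pm_add0 : forall x, pm_eqv (pm_add pm_zero x) x;
  pm_addN : forall x, pm_eqv (pm_add (pm_opp x) x) pm_zero;
  pm_scaleA : forall a b v, pm_eqv (pm_scale a (pm_scale b v)) (pm_scale (a * b) v);
  pm_scale1 : forall v, pm_eqv (pm_scale 1 v) v;
  pm_scaleDr : forall a u v, pm_eqv (pm_scale a (pm_add u v))
                                    (pm_add (pm_scale a u) (pm_scale a v));
  pm_scaleDl : forall a b v, pm_eqv (pm_scale (a + b) v)
                                    (pm_add (pm_scale a v) (pm_scale b v))
}.

Definition qcar (R : comPzRingType) (p : premod R) :=
  {P : pm_car p -> Prop | exists x : pm_car p, P = @pm_eqv R p x}.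

HB.instance Definition _ (R : comPzRingType) (p : premod R) := gen_eqMixin (qcar p).
HB.instance Definition _ (R : comPzRingType) (p : premod R) := gen_choiceMixin (qcar p).

Section QuotTheory.
Variables (R : comPzRingType) (p : premod R).
Local Notation X := (pm_car p).
Local Notation e := (@pm_eqv R p).

Definition qpi (x : X) : qcar p := exist _ (e x) (ex_intro _ x erefl).

Lemma qpi_surj (q : qcar p) : exists x, q = qpi x.
Proof.
case: q => P [x Px]; exists x; subst P; rewrite /qpi.
by congr exist; apply: Prop_irrelevance.
Qed.

Lemma qpi_eq x y : (qpi x = qpi y) <-> e x y.
Proof.
split => [H|H].
  have : e x = e y by move: H; rewrite /qpi => -[].
  by move=> E; rewrite E; apply: pm_refl.
rewrite /qpi; have E : e x = e y.
  apply: funext => z; apply: propext; split => Hz.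
  - exact: pm_trans (pm_sym H) Hz.
  - exact: pm_trans H Hz.
move: (ex_intro _ x erefl : exists z, e x = e z) (ex_intro _ y erefl : exists z, e y = e z).
rewrite E => h1 h2; congr exist; apply: Prop_irrelevance.
Qed.

Definition qrepr (q : qcar p) : X := projT1 (cid (qpi_surj q)).
Lemma qreprK q : qpi (qrepr q) = q.
Proof. by rewrite /qrepr; case: cid => x /= ->. Qed.

Definition qadd (a b : qcar p) := qpi (pm_add (qrepr a) (qrepr b)).
Definition qopp (a : qcar p) := qpi (pm_opp (qrepr a)).
Definition qzero := qpi (@pm_zero R p).
Definition qscale k (a : qcar p) := qpi (pm_scale k (qrepr a)).

Lemma qaddE x y : qadd (qpi x) (qpi y) = qpi (pm_add x y).
Proof.
apply/qpi_eq; apply: pm_add_cong; apply/qpi_eq; exact: qreprK.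
Qed.
Lemma qoppE x : qopp (qpi x) = qpi (pm_opp x).
Proof. apply/qpi_eq; apply: pm_opp_cong; apply/qpi_eq; exact: qreprK. Qed.
Lemma qscaleE k x : qscale k (qpi x) = qpi (pm_scale k x).
Proof. apply/qpi_eq; apply: pm_scale_cong; apply/qpi_eq; exact: qreprK. Qed.

Lemma qaddA : associative qadd.
Proof.
move=> a b c; case: (qpi_surj a) => x ->; case: (qpi_surj b) => y ->;
case: (qpi_surj c) => z ->; rewrite !qaddE; apply/qpi_eq; exact: pm_addA.
Qed.
Lemma qaddC : commutative qadd.
Proof.
move=> a b; case: (qpi_surj a) => x ->; case: (qpi_surj b) => y ->;
rewrite !qaddE; apply/qpi_eq; exact: pm_addC.
Qed.
Lemma qadd0 : left_id qzero qadd.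
Proof. move=> a; case: (qpi_surj a) => x ->; rewrite qaddE; apply/qpi_eq; exact: pm_add0. Qed.
Lemma qaddN : left_inverse qzero qopp qadd.
Proof. move=> a; case: (qpi_surj a) => x ->; rewrite qoppE qaddE; apply/qpi_eq; exact: pm_addN. Qed.
End QuotTheory.

HB.instance Definition _ (R : comPzRingType) (p : premod R) :=
  GRing.isZmodule.Build (qcar p) (@qaddA R p) (@qaddC R p) (@qadd0 R p) (@qaddN R p).

Section QuotTheory2.
Variables (R : comPzRingType) (p : premod R).
Lemma qscaleA a b (v : qcar p) : qscale a (qscale b v) = qscale (a * b) v.
Proof. case: (qpi_surj v) => x ->; rewrite !qscaleE; apply/qpi_eq; exact: pm_scaleA. Qed.
Lemma qscale1 : left_id 1 (@qscale R p).
Proof. move=> v; case: (qpi_surj v) => x ->; rewrite !qscaleE; apply/qpi_eq; exact: pm_scale1. Qed.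
Lemma qscaleDr : right_distributive (@qscale R p) +%R.
Proof.
move=> a u v; case: (qpi_surj u) => x ->; case: (qpi_surj v) => y ->.
have E : forall c d : qcar p, c + d = qadd c d by [].
rewrite !E [qadd (qpi x) _]qaddE !qscaleE qaddE; apply/qpi_eq; exact: pm_scaleDr.
Qed.
Lemma qscaleDl (v : qcar p) : {morph (@qscale R p)^~ v : a b / a + b}.
Proof.
move=> a b; case: (qpi_surj v) => x ->.
have E : forall c d : qcar p, c + d = qadd c d by [].
rewrite E !qscaleE qaddE; apply/qpi_eq; exact: pm_scaleDl.
Qed.
End QuotTheory2.

HB.instance Definition _ (R : comPzRingType) (p : premod R) :=
  GRing.Zmodule_isLmodule.Build R (qcar p) (@qscaleA R p) (@qscale1 R p)
     (@qscaleDr R p) (@qscaleDl R p).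

Definition qmod (R : comPzRingType) (p : premod R) : lmodType R := qcar p.

Section QuotTheory3.
Variables (R : comPzRingType) (p : premod R).
Lemma qpiD x y : (qpi x : qmod p) + qpi y = qpi (pm_add x y).
Proof. exact: qaddE. Qed.
Lemma qpiZ k x : k *: (qpi x : qmod p) = qpi (pm_scale k x).
Proof. exact: qscaleE. Qed.
Lemma qpiN x : - (qpi x : qmod p) = qpi (pm_opp x).
Proof. exact: qoppE. Qed.
Lemma qpi0 : (0 : qmod p) = qpi (@pm_zero R p).
Proof. by []. Qed.
End QuotTheory3.


Section Infra.
Variable R : comPzRingType.

Definition mk_lin (U V : lmodType R) (f : U -> V) (H : is_lin f) : {linear U -> V} :=
  HB.pack f (GRing.isLinear.Build R U V *:%R f H).

Lemma mk_linE (U V : lmodType R) (f : U -> V) (H : is_lin f) x : mk_lin H x = f x.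
Proof. by []. Qed.

Section LinLemmas.
Variables (U V : lmodType R) (f : U -> V) (H : is_lin f).
Lemma linD x y : f (x + y) = f x + f y. Proof. exact: (linearD (mk_lin H)). Qed.
Lemma linZ k x : f (k *: x) = k *: f x. Proof. by rewrite -[LHS]/(mk_lin H (k *: x)) linearZ. Qed.
Lemma linN x : f (- x) = - f x. Proof. exact: (linearN (mk_lin H)). Qed.
Lemma lin0 : f 0 = 0. Proof. exact: (linear0 (mk_lin H)). Qed.
Lemma lin_sum (I : Type) (r : seq I) (F : I -> U) :
  f (\sum_(i <- r) F i) = \sum_(i <- r) f (F i).
Proof. exact: (linear_sum (mk_lin H)). Qed.
End LinLemmas.

Lemma lin_is_lin (U V : lmodType R) (f : {linear U -> V}) : is_lin f.
Proof. by move=> k x y; rewrite linearP. Qed.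

Section Coker.
Variables (X Y : lmodType R) (u : {linear Y -> X}).
Definition ck_eqv (x y : X) := exists z, x - y = u z.

Lemma ck_refl x : ck_eqv x x. Proof. by exists 0; rewrite subrr (lin0 (lin_is_lin u)). Qed.
Lemma ck_sym x y : ck_eqv x y -> ck_eqv y x.
Proof. by case=> z Hz; exists (- z); rewrite (linN (lin_is_lin u)) -Hz opprB. Qed.
Lemma ck_trans x y z : ck_eqv x y -> ck_eqv y z -> ck_eqv x z.
Proof.
case=> a Ha [b Hb]; exists (a + b); rewrite (linD (lin_is_lin u)) -Ha -Hb.
by rewrite addrA subrK.
Qed.
Lemma ck_add x x' y y' : ck_eqv x x' -> ck_eqv y y' -> ck_eqv (x + y) (x' + y').
Proof.
case=> a Ha [b Hb]; exists (a + b); rewrite (linD (lin_is_lin u)) -Ha -Hb.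
by rewrite opprD addrACA.
Qed.
Lemma ck_opp x x' : ck_eqv x x' -> ck_eqv (- x) (- x').
Proof. case=> a Ha; exists (- a); rewrite (linN (lin_is_lin u)) -Ha opprD; reflexivity. Qed.
Lemma ck_scale k x x' : ck_eqv x x' -> ck_eqv (k *: x) (k *: x').
Proof. by case=> a Ha; exists (k *: a); rewrite (linZ (lin_is_lin u)) -Ha scalerBr. Qed.
Lemma ck_eq x y : x = y -> ck_eqv x y.
Proof. by move=> ->; apply: ck_refl. Qed.

Definition ck_pm : premod R :=
  @PreMod R X +%R (fun x => - x) 0 *:%R ck_eqv ck_refl ck_sym ck_trans
    ck_add ck_opp ck_scale
    (fun x y z => ck_eq (addrA x y z)) (fun x y => ck_eq (addrC x y))
    (fun x => ck_eq (add0r x)) (fun x => ck_eq (addNr x))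
    (fun a b v => ck_eq (scalerA a b v)) (fun v => ck_eq (scale1r v))
    (fun a x y => ck_eq (scalerDr a x y)) (fun a b v => ck_eq (scalerDl v a b)).

Definition coker : lmodType R := qmod ck_pm.
Definition ck_pi (x : X) : coker := @qpi R ck_pm x.

Lemma ck_pi_lin : is_lin ck_pi.
Proof. by move=> k x y; rewrite /ck_pi qpiZ qpiD. Qed.
Definition ck_piL : {linear X -> coker} := mk_lin ck_pi_lin.

Lemma ck_pi0 x : ck_pi x = 0 <-> exists z, x = u z.
Proof.
rewrite qpi0; split.
  by move/qpi_eq => [z Hz]; exists z; rewrite -Hz /= subr0.
by case=> z Hz; apply/qpi_eq; exists z; rewrite /= subr0.
Qed.

Lemma ck_pi_surj (q : coker) : exists x, q = ck_pi x.
Proof. exact: (@qpi_surj R ck_pm q). Qed.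

Lemma ck_pi_u z : ck_pi (u z) = 0.
Proof. by apply/ck_pi0; exists z. Qed.
End Coker.

End Infra.


Section Tensor.
Variable R : comPzRingType.
Variables (M N : lmodType R).

Definition bilin (P : lmodType R) (b : M -> N -> P) :=
  (forall m, is_lin (b m)) /\ (forall n, is_lin (fun m => b m n)).

Definition sb (P : lmodType R) (b : M -> N -> P) (l : seq (M * N)) : P :=
  \sum_(q <- l) b q.1 q.2.

Definition t_opp (l : seq (M * N)) := map (fun q => (- q.1, q.2)) l.
Definition t_scale (k : R) (l : seq (M * N)) := map (fun q => (k *: q.1, q.2)) l.

Definition t_eqv (l1 l2 : seq (M * N)) : Prop :=
  forall (P : lmodType R) (b : M -> N -> P), bilin b -> sb b l1 = sb b l2.

Section SB.
Variables (P : lmodType R) (b : M -> N -> P) (Hb : bilin b).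
Lemma sb_cat l1 l2 : sb b (l1 ++ l2) = sb b l1 + sb b l2.
Proof. by rewrite /sb big_cat. Qed.
Lemma sb_nil : sb b [::] = 0.
Proof. by rewrite /sb big_nil. Qed.
Lemma sb_opp l : sb b (t_opp l) = - sb b l.
Proof.
rewrite /sb /t_opp big_map -sumrN; apply: eq_bigr => q _ /=.
exact: (linN (Hb.2 q.2)).
Qed.
Lemma sb_scale k l : sb b (t_scale k l) = k *: sb b l.
Proof.
rewrite /sb /t_scale big_map scaler_sumr; apply: eq_bigr => q _ /=.
exact: (linZ (Hb.2 q.2)).
Qed.
End SB.

Lemma t_refl x : t_eqv x x. Proof. by []. Qed.
Lemma t_sym x y : t_eqv x y -> t_eqv y x. Proof. by move=> H P b Hb; rewrite H. Qed.
Lemma t_trans x y z : t_eqv x y -> t_eqv y z -> t_eqv x z.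
Proof. by move=> H1 H2 P b Hb; rewrite H1 ?H2. Qed.
Lemma t_add_cong x x' y y' : t_eqv x x' -> t_eqv y y' -> t_eqv (x ++ y) (x' ++ y').
Proof. by move=> H1 H2 P b Hb; rewrite !sb_cat H1 ?H2. Qed.
Lemma t_opp_cong x x' : t_eqv x x' -> t_eqv (t_opp x) (t_opp x').
Proof. by move=> H P b Hb; rewrite !sb_opp // H. Qed.
Lemma t_scale_cong k x x' : t_eqv x x' -> t_eqv (t_scale k x) (t_scale k x').
Proof. by move=> H P b Hb; rewrite !sb_scale // H. Qed.
Lemma t_addA x y z : t_eqv (x ++ (y ++ z)) ((x ++ y) ++ z).
Proof. by rewrite catA. Qed.
Lemma t_addC x y : t_eqv (x ++ y) (y ++ x).
Proof. by move=> P b Hb; rewrite !sb_cat addrC. Qed.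
Lemma t_add0 x : t_eqv ([::] ++ x) x.
Proof. by []. Qed.
Lemma t_addN x : t_eqv (t_opp x ++ x) [::].
Proof. by move=> P b Hb; rewrite sb_cat sb_opp // addNr sb_nil. Qed.
Lemma t_scaleA a c v : t_eqv (t_scale a (t_scale c v)) (t_scale (a * c) v).
Proof. by move=> P b Hb; rewrite !sb_scale // scalerA. Qed.
Lemma t_scale1 v : t_eqv (t_scale 1 v) v.
Proof. by move=> P b Hb; rewrite !sb_scale // scale1r. Qed.
Lemma t_scaleDr a x y : t_eqv (t_scale a (x ++ y)) (t_scale a x ++ t_scale a y).
Proof. by move=> P b Hb; rewrite !(sb_scale, sb_cat) // scalerDr. Qed.
Lemma t_scaleDl a c v : t_eqv (t_scale (a + c) v) (t_scale a v ++ t_scale c v).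
Proof. by move=> P b Hb; rewrite !(sb_scale, sb_cat) // scalerDl. Qed.

Definition t_pm : premod R :=
  @PreMod R (seq (M * N)) cat t_opp [::] t_scale t_eqv t_refl t_sym t_trans
    t_add_cong t_opp_cong t_scale_cong t_addA t_addC t_add0 t_addN
    t_scaleA t_scale1 t_scaleDr t_scaleDl.

Definition T0 : lmodType R := qmod t_pm.
Definition tp0 (m : M) (n : N) : T0 := @qpi R t_pm [:: (m, n)].

Lemma T0_sum (l : seq (M * N)) : (@qpi R t_pm l : T0) = \sum_(q <- l) tp0 q.1 q.2.
Proof.
elim: l => [|q l IH]; first by rewrite big_nil qpi0.
rewrite big_cons -IH /tp0 qpiD; by case: q.
Qed.

Lemma tp0_bilin : (forall m, is_lin (tp0 m)) /\ (forall n, is_lin (fun m => tp0 m n)).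
Proof.
split.
  move=> m k x y; rewrite /tp0 qpiZ qpiD; apply/qpi_eq => P b Hb.
  rewrite /sb /= !big_cons !big_nil /= !addr0.
  by rewrite (linD (Hb.1 m)) (linZ (Hb.1 m)) (linZ (Hb.2 x)).
move=> n k x y; rewrite /tp0 qpiZ qpiD; apply/qpi_eq => P b Hb.
rewrite /sb /= !big_cons !big_nil /= !addr0.
by rewrite (linD (Hb.2 n)).
Qed.

Section Univ.
Variables (P : lmodType R) (b : M -> N -> P) (Hb : bilin b).
Definition tF (q : T0) : P := sb b (@qrepr R t_pm q).
Lemma tF_pi l : tF (@qpi R t_pm l) = sb b l.
Proof.
rewrite /tF; have := @qreprK R t_pm (@qpi R t_pm l).
by move/qpi_eq => H; apply: H.
Qed.
Lemma tF_lin : is_lin tF.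
Proof.
move=> k q1 q2; case: (@qpi_surj R t_pm q1) => l1 ->.
case: (@qpi_surj R t_pm q2) => l2 ->.
rewrite qpiZ qpiD !tF_pi /=.
by rewrite sb_cat // sb_scale.
Qed.
End Univ.

Lemma T0_univ (P : lmodType R) (b : M -> N -> P) :
     (forall m, is_lin (b m)) -> (forall n, is_lin (fun m => b m n)) ->
     (exists f : {linear T0 -> P}, forall m n, f (tp0 m n) = b m n) /\
     (forall f g : {linear T0 -> P},
         (forall m n, f (tp0 m n) = b m n) ->
         (forall m n, g (tp0 m n) = b m n) -> f =1 g).
Proof.
move=> H1 H2; have Hb : bilin b by exact: (conj H1 H2).
split.
  exists (mk_lin (tF_lin Hb)) => m n; rewrite mk_linE /tp0 (tF_pi Hb).
  by rewrite /sb big_cons big_nil addr0.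
move=> f g Hf Hg q; case: (@qpi_surj R t_pm q) => l ->.
rewrite T0_sum !linear_sum; apply: eq_bigr => x _.
by rewrite Hf Hg.
Qed.

Definition T0tp : tensor_product M N :=
  @TensorProduct R M N T0 tp0 tp0_bilin T0_univ.

End Tensor.

Section TGen.
Variable R : comPzRingType.

Section MN.
Variables (M N : lmodType R).

Lemma tpl2 (T : tensor_product M N) m : is_lin (tp_map T m).
Proof. exact: (tp_bilin T).1. Qed.
Lemma tpl1 (T : tensor_product M N) n : is_lin (fun m => tp_map T m n).
Proof. exact: (tp_bilin T).2. Qed.

Lemma tp_gen (T : tensor_product M N) (x : T) :
  exists l : seq (M * N), x = \sum_(q <- l) tp_map T q.1 q.2.
Proof.
have [[al Hal] _] := tp_univ T (tpl2 (T0tp M N)) (tpl1 (T0tp M N)).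
have [[be Hbe] _] := tp_univ (T0tp M N) (tpl2 T) (tpl1 T).
have [_ U] := tp_univ T (tpl2 T) (tpl1 T).
have Hc : is_lin (fun z => be (al z)) by move=> k a b; rewrite !linearP.
have Hid : is_lin (fun z : T => z) by [].
have E := U (mk_lin Hc) (mk_lin Hid).
have E2 : forall z, be (al z) = z.
  by move=> z; apply: (E _ _ z) => m n //=; rewrite Hal Hbe.
case: (@qpi_surj R (t_pm M N) (al x)) => l Hl.
exists l; rewrite -[x]E2 Hl (T0_sum l) linear_sum; apply: eq_bigr => q _.
exact: Hbe.
Qed.

Lemma tp_ext (T : tensor_product M N) (P : lmodType R) (f g : T -> P) :
  {morph f : x y / x + y} -> f 0 = 0 ->
  {morph g : x y / x + y} -> g 0 = 0 ->
  (forall m n, f (tp_map T m n) = g (tp_map T m n)) -> forall x, f x = g x.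
Proof.
move=> fD f0 gD g0 H x; case: (tp_gen x) => l ->.
elim: l => [|q l IH]; first by rewrite !big_nil f0 g0.
by rewrite !big_cons fD gD IH H.
Qed.
End MN.

Lemma tmap (M A B : lmodType R) (h : {linear A -> B})
  (TA : tensor_product M A) (TB : tensor_product M B) :
  exists phi : {linear TA -> TB}, is_tensor_map h phi.
Proof.
have H1 : forall m, is_lin (fun a => tp_map TB m (h a)).
  by move=> m k x y; rewrite linearP (tpl2 TB m).
have H2 : forall a, is_lin (fun m => tp_map TB m (h a)).
  by move=> a; apply: tpl1.
have [[phi Hphi] _] := tp_univ TA H1 H2.
by exists phi.
Qed.

Lemma tensor_surj (M A B : lmodType R) (f : {linear A -> B}) (s : R)
  (TA : tensor_product M A) (TB : tensor_product M B) (phi : {linear TA -> TB}) :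
  (forall b, exists a, f a = s *: b) -> is_tensor_map f phi ->
  forall z, exists y, phi y = s *: z.
Proof.
move=> Hs Hphi z; case: (tp_gen z) => l ->.
elim: l => [|q l [y Hy]]; first by exists 0; rewrite big_nil linear0 scaler0.
case: (Hs q.2) => a Ha.
exists (tp_map TA q.1 a + y); rewrite linearD Hy big_cons scalerDr Hphi Ha.
by rewrite (linZ (tpl2 TB q.1)).
Qed.

Lemma tensor_comp (M A B C : lmodType R) (f : {linear A -> B}) (g : {linear B -> C})
  (s : R) (TA : tensor_product M A) (TB : tensor_product M B) (TC : tensor_product M C)
  (phi : {linear TA -> TB}) (psi : {linear TB -> TC}) :
  (forall a, g (s *: f a) = 0) -> is_tensor_map f phi -> is_tensor_map g psi ->
  forall x, psi (s *: phi x) = 0.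
Proof.
move=> H Hphi Hpsi x.
have := @tp_ext M A TA TC (fun x => psi (s *: phi x)) (fun _ => 0).
apply => //=.
- by move=> a b; rewrite linearD scalerDr linearD.
- by rewrite linear0 scaler0 linear0.
- by move=> a b; rewrite addr0.
- by move=> m a; rewrite Hphi -(linZ (tpl2 TB m)) Hpsi H (lin0 (tpl2 TC m)).
Qed.

End TGen.


Section Mid.
Variable R : comPzRingType.

Lemma tensor_mid (M A B C : lmodType R) (f : {linear A -> B}) (g : {linear B -> C})
  (s : R) (TA : tensor_product M A) (TB : tensor_product M B) (TC : tensor_product M C)
  (phi : {linear TA -> TB}) (psi : {linear TB -> TC}) :
  (forall b, g b = 0 -> exists a, f a = s *: b) ->
  (forall c, exists b, g b = s *: c) ->
  is_tensor_map f phi -> is_tensor_map g psi ->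
  forall y, psi y = 0 -> exists x, phi x = (s * s) *: y.
Proof.
move=> Hker Hsurj Hphi Hpsi.
pose pi := ck_piL phi.
pose bc c := projT1 (cid (Hsurj c)).
have Hbc : forall c, g (bc c) = s *: c by move=> c; rewrite /bc; case: cid.
have key : forall m b b', g b = g b' ->
    pi (tp_map TB m (s *: b)) = pi (tp_map TB m (s *: b')).
  move=> m b b' Hg; apply/eqP; rewrite -subr_eq0 -linearB; apply/eqP.
  have : g (b - b') = 0 by rewrite linearB Hg subrr.
  case/Hker => a Ha.
  rewrite -(linN (tpl2 TB m)) -(linD (tpl2 TB m)) -scalerBr -Ha -Hphi.
  exact: ck_pi_u.
pose be m c := pi (tp_map TB m (s *: bc c)).
have H1 : forall m, is_lin (be m).
  move=> m k c1 c2; rewrite /be.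
  rewrite (key m (bc (k *: c1 + c2)) (k *: bc c1 + bc c2)); last first.
    by rewrite linearP !Hbc scalerDr !scalerA mulrC.
  by rewrite scalerDr scalerA mulrC -scalerA (tpl2 TB m) linearP.
have H2 : forall c, is_lin (fun m => be m c).
  by move=> c k m1 m2; rewrite /be (tpl1 TB) linearP.
have [[F HF] _] := tp_univ TC H1 H2.
have HFpsi : forall z, F (psi z) = pi ((s * s) *: z).
  apply: tp_ext.
  - by move=> a b; rewrite !linearD.
  - by rewrite !linear0.
  - by move=> a b; rewrite scalerDr linearD.
  - by rewrite scaler0 linear0.
  move=> m b; rewrite Hpsi HF /be (key m (bc (g b)) (s *: b)); last first.
    by rewrite Hbc linearZ.
  by rewrite -scalerA !(linZ (tpl2 TB m)).
move=> y Hy.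
have : pi ((s * s) *: y) = 0 by rewrite -HFpsi Hy linear0.
by case/ck_pi0 => x Hx; exists x.
Qed.

Variable S : R -> Prop.
Hypothesis HS : mult_subset S.

Lemma uS_exact_build (A B C : lmodType R) (f : {linear A -> B}) (g : {linear B -> C})
  s1 s2 s3 s4 : S s1 -> S s2 -> S s3 -> S s4 ->
  (forall a, f a = 0 -> s1 *: a = 0) ->
  (forall b, g b = 0 -> exists a, f a = s2 *: b) ->
  (forall a, g (s3 *: f a) = 0) ->
  (forall c, exists b, g b = s4 *: c) -> uS_exact S f g.
Proof.
move=> S1 S2 S3 S4 H1 H2 H3 H4.
exists (s1 * s2 * s3 * s4); split.
  by apply: (proj2 HS) => //; apply: (proj2 HS) => //; apply: (proj2 HS).
split.
  move=> a /H1 Ha.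
  have -> : s1 * s2 * s3 * s4 = (s2 * s3 * s4) * s1 by ring.
  by rewrite -scalerA Ha scaler0.
split.
  move=> b /H2 [a Ha]; exists ((s1 * s3 * s4) *: a); rewrite (linZ (lin_is_lin f)) Ha scalerA.
  by congr (_ *: _); ring.
split.
  move=> a.
  have -> : s1 * s2 * s3 * s4 = (s1 * s2 * s4) * s3 by ring.
  by rewrite -scalerA (linZ (lin_is_lin g)) H3 scaler0.
move=> c; case: (H4 (s1 * s2 * s3 *: c)) => b Hb.
by exists b; rewrite Hb scalerA; congr (_ *: _); ring.
Qed.

Lemma AP_intro (E : lmodType R) :
 (forall (B C : lmodType R) (f : {linear E -> B}) (g : {linear B -> C}),
   uS_exact S f g ->
   forall (M : lmodType R) (TE : tensor_product M E) (TB : tensor_product M B)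
     (phi : {linear TE -> TB}), is_tensor_map f phi ->
   exists t, S t /\ forall z, phi z = 0 -> t *: z = 0) ->
 uS_abs_pure S E.
Proof.
move=> H B C f g Hex; split; first exact: Hex.
move=> M TE TB TC phi psi Hphi Hpsi.
have [t [St Ht]] := H B C f g Hex M TE TB phi Hphi.
have [s [Ss [_ [H2 [H3 H4]]]]] := Hex.
apply: (@uS_exact_build _ _ _ _ _ t (s * s) s s) => //.
- exact: (proj2 HS).
- exact: (tensor_mid H2 H4 Hphi Hpsi).
- exact: (tensor_comp H3 Hphi Hpsi).
- exact: (tensor_surj H4 Hpsi).
Qed.

Lemma AP_ker (X Y : lmodType R) (u : {linear X -> Y}) (s : R) :
  uS_abs_pure S X -> S s -> (forall x, u x = 0 -> s *: x = 0) ->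
  forall (M : lmodType R) (TX : tensor_product M X) (TY : tensor_product M Y)
    (phi : {linear TX -> TY}), is_tensor_map u phi ->
  exists t, S t /\ forall z, phi z = 0 -> t *: z = 0.
Proof.
move=> AP Ss Hu M TX TY phi Hphi.
pose q := ck_piL u.
have Hex : uS_exact S u q.
  exists s; split => //; split => //; split.
    move=> y /ck_pi0 [z ->]; exists (s *: z); by rewrite !linearZ.
  split.
    by move=> x; rewrite -linearZ; apply: ck_pi_u.
  move=> c; case: (ck_pi_surj c) => y ->; exists (s *: y).
  by rewrite linearZ.
have [psi Hpsi] := tmap q TY (T0tp M (coker u)).
have [_ Hp] := AP _ _ u q Hex.
have [t [St [Ht _]]] := Hp M TX TY (T0tp M (coker u)) phi psi Hphi Hpsi.
by exists t.
Qed.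

End Mid.


Section Parts.
Variable R : comPzRingType.

Section Pairs.
Variables (B E : lmodType R).
Lemma pairZ k (a : B) (b : E) : k *: ((a, b) : (B * E)%type) = (k *: a, k *: b).
Proof. by []. Qed.
Lemma pairD (a c : B) (b d : E) : ((a, b) : (B * E)%type) + (c, d) = (a + c, b + d).
Proof. by []. Qed.
Lemma pairN (a : B) (b : E) : - ((a, b) : (B * E)%type) = (- a, - b).
Proof. by []. Qed.
Lemma pair0 : (0 : (B * E)%type) = (0, 0).
Proof. by []. Qed.
End Pairs.

Variable S : R -> Prop.
Hypothesis HS : mult_subset S.

Lemma part1b (E : lmodType R) : uS_injective S E -> uS_abs_pure S E.
Proof.
move=> Hinj; apply: AP_intro => // B C f g Hex M TE TB phi Hphi.
have [s [Ss [_ [_ [_ H4]]]]] := Hinj E B C f g Hex.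
have Hid : is_lin (fun x : E => x) by [].
case: (H4 (mk_lin Hid)) => k Hk.
have [kt Hkt] := tmap k TB TE.
have E1 : forall z, kt (phi z) = s *: z.
  apply: tp_ext.
  - by move=> a b; rewrite !linearD.
  - by rewrite !linear0.
  - by move=> a b; rewrite scalerDr.
  - by rewrite scaler0.
  by move=> m a; rewrite Hphi Hkt Hk mk_linE (linZ (tpl2 TE m)).
exists s; split => // z Hz.
by rewrite -E1 Hz linear0.
Qed.

Lemma part1a (E : lmodType R) : abs_pure E -> uS_abs_pure S E.
Proof.
move=> Hap; apply: AP_intro => // B C f g Hex M TE TB phi Hphi.
have [s [Ss [H1 _]]] := Hex.
pose w (e : E) : (B * E)%type := (f e, - (s *: e)).
have Hw : is_lin w.
  move=> k x y; rewrite /w pairZ pairD linearP.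
  by congr (_, _); rewrite scalerDr opprD !scalerN !scalerA mulrC.
pose wL := mk_lin Hw.
pose pi := ck_pi wL.
have Hpi : is_lin pi := ck_pi_lin wL.
pose io (e : E) := pi (0, e).
pose be (b : B) := pi (b, 0).
have Hio : is_lin io.
  by move=> k x y; rewrite /io -(linZ Hpi) -(linD Hpi) pairZ pairD scaler0 add0r.
have Hbe : is_lin be.
  by move=> k x y; rewrite /be -(linZ Hpi) -(linD Hpi) pairZ pairD scaler0 add0r.
have io_inj : injective (mk_lin Hio).
  move=> x y; rewrite !mk_linE => Hxy.
  have : io (x - y) = 0 by rewrite (linD Hio) (linN Hio) Hxy subrr.
  rewrite /io.
  case/ck_pi0 => z; rewrite mk_linE /w => -[Hfz Hz].
  have Hs := H1 z (esym Hfz); move: Hz; rewrite Hs oppr0 => /eqP; rewrite subr_eq0 => /eqP.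
  by [].
have rel : forall e, io (s *: e) = be (f e).
  move=> e; apply/eqP; rewrite -subr_eq0 /io /be -(linN Hpi) -(linD Hpi).
  have -> : ((0, s *: e) : (B * E)%type) - (f e, 0) = - w e.
    by rewrite /w !pairN pairD add0r oppr0 addr0 opprK.
  by rewrite (linN Hpi) -[w e]/(wL e) /pi ck_pi_u oppr0.
have [iot Hiot] := tmap (mk_lin Hio) TE (T0tp M (coker wL)).
have [bet Hbet] := tmap (mk_lin Hbe) TB (T0tp M (coker wL)).
have E1 : forall z, iot (s *: z) = bet (phi z).
  apply: tp_ext.
  - by move=> a b; rewrite scalerDr !linearD.
  - by rewrite scaler0 !linear0.
  - by move=> a b; rewrite !linearD.
  - by rewrite !linear0.
  move=> m a; rewrite Hphi Hbet -(linZ (tpl2 TE m)) Hiot !mk_linE.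
  by rewrite rel.
exists s; split => // z Hz.
apply: (Hap _ _ io_inj M TE (T0tp M (coker wL)) iot Hiot).
by rewrite E1 Hz !linear0.
Qed.

End Parts.


Section Parts2.
Variable R : comPzRingType.
Variable S : R -> Prop.
Hypothesis HS : mult_subset S.

Lemma SM a b : S a -> S b -> S (a * b).
Proof. exact: (proj2 HS). Qed.

Lemma comp_lin (U V W : lmodType R) (f : {linear U -> V}) (g : {linear V -> W}) :
  is_lin (fun x => g (f x)).
Proof. by move=> k x y; rewrite !linearP. Qed.

Lemma part4 (A B : lmodType R) (f : {linear A -> B}) :
  uS_iso S f -> uS_abs_pure S A -> uS_abs_pure S B.
Proof.
move=> [s [Ss [I1 I2]]] APA.
apply: AP_intro => // D F h k Hex2 M TB TD phih Hphih.
have [r [Sr [K1 _]]] := Hex2.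
pose hf := mk_lin (comp_lin f h).
have Khf : forall a, hf a = 0 -> (s * r) *: a = 0.
  move=> a; rewrite mk_linE => /K1; rewrite -linearZ => /I1.
  by rewrite scalerA.
have [phif Hphif] := tmap f (T0tp M A) TB.
pose phihf := mk_lin (comp_lin phif phih).
have Hphihf : is_tensor_map hf phihf.
  by move=> m a; rewrite !mk_linE Hphif Hphih.
have [t1 [St1 Ht1]] := AP_ker APA (SM Ss Sr) Khf Hphihf.
have Hsurj := tensor_surj I2 Hphif.
exists (t1 * s); split; first exact: SM.
move=> z Hz; case: (Hsurj z) => y Hy.
have : phihf y = 0 by rewrite mk_linE Hy (linZ (lin_is_lin phih)) Hz scaler0.
move/Ht1 => Hy1.
by rewrite -scalerA -Hy -linearZ Hy1 linear0.
Qed.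

Lemma part5 (A B C : lmodType R) (f : {linear A -> B}) (g : {linear B -> C}) :
  uS_pure S f g -> uS_abs_pure S B -> uS_abs_pure S A.
Proof.
move=> [Hex HT] APB.
apply: AP_intro => // D F h k Hex2 M TA TD phih Hphih.
have [r [Sr [K1 _]]] := Hex2.
pose w (a : A) : (B * D)%type := (f a, - h a).
have Hw : is_lin w.
  move=> c x y; rewrite /w pairZ pairD !linearP.
  by congr (_, _); rewrite opprD scalerN.
pose wL := mk_lin Hw.
pose pi := ck_pi wL.
have Hpi : is_lin pi := ck_pi_lin wL.
pose iB (b : B) := pi (b, 0).
pose iD (d : D) := pi (0, d).
have HiB : is_lin iB.
  by move=> c x y; rewrite /iB -(linZ Hpi) -(linD Hpi) pairZ pairD scaler0 add0r.
have HiD : is_lin iD.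
  by move=> c x y; rewrite /iD -(linZ Hpi) -(linD Hpi) pairZ pairD scaler0 add0r.
have KiB : forall b, mk_lin HiB b = 0 -> r *: b = 0.
  move=> b; rewrite mk_linE /iB => /ck_pi0 [z]; rewrite mk_linE /w => -[-> Hz].
  have : h z = 0 by rewrite -[h z]opprK -Hz oppr0.
  by move/K1 => Hrz; rewrite -linearZ Hrz linear0.
have rel : forall a, iB (f a) = iD (h a).
  move=> a; apply/eqP; rewrite -subr_eq0 /iB /iD -(linN Hpi) -(linD Hpi).
  have -> : ((f a, 0) : (B * D)%type) - (0, h a) = w a.
    by rewrite /w pairN pairD oppr0 addr0 add0r.
  by rewrite -[w a]/(wL a) /pi ck_pi_u.
have [phif Hphif] := tmap f TA (T0tp M B).
have [psig Hpsig] := tmap g (T0tp M B) (T0tp M C).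
have [t0 [St0 [Ht0 _]]] := HT M TA (T0tp M B) (T0tp M C) phif psig Hphif Hpsig.
have [phiB HphiB] := tmap (mk_lin HiB) (T0tp M B) (T0tp M (coker wL)).
have [phiD HphiD] := tmap (mk_lin HiD) TD (T0tp M (coker wL)).
have [t1 [St1 Ht1]] := AP_ker APB Sr KiB HphiB.
have E1 : forall z, phiB (phif z) = phiD (phih z).
  apply: tp_ext.
  - by move=> a b; rewrite !linearD.
  - by rewrite !linear0.
  - by move=> a b; rewrite !linearD.
  - by rewrite !linear0.
  by move=> m a; rewrite Hphif Hphih HphiB HphiD !mk_linE rel.
exists (t0 * t1); split; first exact: SM.
move=> z Hz.
have : phiB (phif z) = 0 by rewrite E1 Hz linear0.
move/Ht1; rewrite -linearZ => /Ht0.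
by rewrite scalerA.
Qed.

End Parts2.


Section Parts3.
Variable R : comPzRingType.
Variable S : R -> Prop.
Hypothesis HS : mult_subset S.

Lemma part3 (A B C : lmodType R) (f : {linear A -> B}) (g : {linear B -> C}) :
  uS_exact S f g -> uS_abs_pure S A -> uS_abs_pure S C -> uS_abs_pure S B.
Proof.
move=> Hex APA APC.
have [s [Ss [F1 [F2 [F3 F4]]]]] := Hex.
apply: AP_intro => // D F h k Hex2 M TB TD phih Hphih.
have [r [Sr [K1 _]]] := Hex2.
pose hf := mk_lin (comp_lin f h).
have Khf : forall a, hf a = 0 -> (s * r) *: a = 0.
  move=> a; rewrite mk_linE => /K1; rewrite -(linZ (lin_is_lin f)) => /F1.
  by rewrite scalerA.
have [phif Hphif] := tmap f (T0tp M A) TB.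
pose phihf := mk_lin (comp_lin phif phih).
have Hphihf : is_tensor_map hf phihf.
  by move=> m a; rewrite !mk_linE Hphif Hphih.
have [t1 [St1 Ht1]] := AP_ker APA (SM HS Ss Sr) Khf Hphihf.
pose pi := ck_pi hf.
have Hpi : is_lin pi := ck_pi_lin hf.
pose bc c := projT1 (cid (F4 c)).
have Hbc : forall c, g (bc c) = s *: c by move=> c; rewrite /bc; case: cid.
have key : forall b b', g b = g b' -> pi (s *: h b) = pi (s *: h b').
  move=> b b' Hg; apply/eqP; rewrite -subr_eq0 -(linN Hpi) -(linD Hpi).
  have : g (b - b') = 0 by rewrite linearB Hg subrr.
  case/F2 => a Ha.
  rewrite -scalerBr -linearB -(linZ (lin_is_lin h)) -Ha.
  by rewrite -[h (f a)]/(hf a) /pi ck_pi_u.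
pose h' c := pi (s *: h (bc c)).
have Hh' : is_lin h'.
  move=> c c1 c2; rewrite /h'.
  rewrite (key (bc (c *: c1 + c2)) (c *: bc c1 + bc c2)); last first.
    by rewrite linearP !Hbc scalerDr !scalerA mulrC.
  by rewrite linearP scalerDr scalerA mulrC -scalerA (linD Hpi) (linZ Hpi).
have Kh' : forall c, mk_lin Hh' c = 0 -> (s * r * s * s) *: c = 0.
  move=> c; rewrite mk_linE /h' => /ck_pi0 [z]; rewrite mk_linE => Hz.
  have : h (s *: bc c - f z) = 0 by rewrite (linD (lin_is_lin h)) (linN (lin_is_lin h)) (linZ (lin_is_lin h)) Hz subrr.
  move/K1; rewrite scalerBr => /eqP; rewrite subr_eq0 => /eqP Hr.
  have Hg : r *: (s *: (s *: c)) = r *: g (f z).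
    by rewrite -(Hbc c) -!(linZ (lin_is_lin g)) Hr.
  have -> : (s * r * s * s) *: c = s *: (r *: (s *: (s *: c))).
    by rewrite !scalerA; congr (_ *: _); ring.
  by rewrite Hg scalerA mulrC -scalerA -(linZ (lin_is_lin g)) F3 scaler0.
have SK : S (s * r * s * s) by apply: (SM HS) => //; apply: (SM HS) => //; apply: (SM HS).
have [phih' Hphih'] := tmap (mk_lin Hh') (T0tp M C) (T0tp M (coker hf)).
have [t2 [St2 Ht2]] := AP_ker APC SK Kh' Hphih'.
have [phig Hphig] := tmap g TB (T0tp M C).
have [phipi Hphipi] := tmap (ck_piL hf) TD (T0tp M (coker hf)).
have E1 : forall z, phih' (phig z) = phipi ((s * s) *: phih z).
  apply: tp_ext.
  - by move=> a b; rewrite !linearD.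
  - by rewrite !linear0.
  - by move=> a b; rewrite linearD scalerDr linearD.
  - by rewrite linear0 scaler0 linear0.
  move=> m b; rewrite Hphig Hphih' Hphih -(linZ (tpl2 TD m)) Hphipi !mk_linE.
  rewrite /h' (key (bc (g b)) (s *: b)); last by rewrite Hbc linearZ.
  by rewrite (linZ (lin_is_lin h)) scalerA.
have Hmid := tensor_mid F2 F4 Hphif Hphig.
exists (t1 * (s * s) * t2); split.
  by apply: (SM HS) => //; apply: (SM HS) => //; apply: (SM HS).
move=> z Hz.
have : phig (t2 *: z) = 0.
  by rewrite linearZ; apply: Ht2; rewrite E1 Hz scaler0 linear0.
case/Hmid => x Hx.
have : phihf x = 0.
  by rewrite mk_linE Hx !(linZ (lin_is_lin phih)) Hz !scaler0.
move/Ht1 => Hx1.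
have -> : (t1 * (s * s) * t2) *: z = t1 *: ((s * s) *: (t2 *: z)) by rewrite !scalerA mulrA.
by rewrite -Hx -(linZ (lin_is_lin phif)) Hx1 (lin0 (lin_is_lin phif)).
Qed.

Lemma part2 (M0 : lmodType R) (l : seq (lmodType R)) :
  uS_abs_pure S M0 -> (forall i, (i < size l)%N -> uS_abs_pure S (nth M0 l i)) ->
  uS_abs_pure S (dsum M0 l).
Proof.
elim: l M0 => [|M1 l IH] M0 AP0 APi //=.
have AP1 : uS_abs_pure S (dsum M1 l).
  apply: IH; first exact: (APi 0%N).
  move=> i Hi; have := APi i.+1 Hi; rewrite /=.
  by rewrite (set_nth_default M1 M0 Hi).
pose f (a : M0) : (M0 * dsum M1 l)%type := (a, 0).
have Hf : is_lin f by move=> k x y; rewrite /f pairZ pairD scaler0 addr0.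
pose g (p : (M0 * dsum M1 l)%type) : dsum M1 l := p.2.
have Hg : is_lin g by [].
apply: (@part3 _ _ _ (mk_lin Hf) (mk_lin Hg)) => //.
exists 1; split; first exact: (proj1 HS).
split; first by move=> a; rewrite mk_linE /f => -[->]; rewrite scale1r.
split.
  by move=> [a b]; rewrite mk_linE /g /= => ->; exists a; rewrite scale1r.
split; first by move=> a; rewrite !mk_linE /g /f pairZ /= scaler0.
by move=> c; exists (0, c); rewrite scale1r.
Qed.

End Parts3.


Local Close Scope ring_scope.

Theorem proposition3p3 (R : comPzRingType) (S : R -> Prop) (HS : mult_subset S) :
  (* (1) *)
  (forall E : lmodType R, abs_pure E -> uS_abs_pure S E) /\
  (forall E : lmodType R, uS_injective S E -> uS_abs_pure S E) /\
  (* (2) *)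
  (forall (M0 : lmodType R) (l : seq (lmodType R)),
      uS_abs_pure S M0 -> (forall i, (i < size l)%N -> uS_abs_pure S (nth M0 l i)) ->
      uS_abs_pure S (dsum M0 l)) /\
  (* (3) *)
  (forall (A B C : lmodType R) (f : {linear A -> B}) (g : {linear B -> C}),
      uS_exact S f g -> uS_abs_pure S A -> uS_abs_pure S C -> uS_abs_pure S B) /\
  (* (4) *)
  (forall (A B : lmodType R) (f : {linear A -> B}),
      uS_iso S f -> uS_abs_pure S A -> uS_abs_pure S B) /\
  (* (5) *)
  (forall (A B C : lmodType R) (f : {linear A -> B}) (g : {linear B -> C}),
      uS_pure S f g -> uS_abs_pure S B -> uS_abs_pure S A).
Proof.
split; first by move=> E; exact: part1a.
split; first by move=> E; exact: part1b.
split; first by move=> M0 l; exact: part2.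
split; first by move=> A B C f g; exact: part3.
split; first by move=> A B f; exact: part4.
by move=> A B C f g; exact: part5.
Qed.
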